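(* A set system $H=(U,(A_1,\dots,A_m))$ is harmonic if and only if $|H_{I_1,I_2}|=|H_{J_1,J_2}|$ for all pairs $(I_1,I_2)\sim(J_1,J_2)$.
   Context: For $I_1,I_2\subseteq[m]$, $H_{I_1,I_2}=\bigcap_{i\in I_1}A_i\cap\bigcap_{i\in I_2}(U\setminus A_i)$ (an empty intersection is $U$), and $H_I=H_{I,\emptyset}$. The run decomposition of a finite set $I$ of positive integers is the partition formed by the sizes, in nonincreasing order, of the maximal runs of consecutive integers in $I$. $H$ is harmonic if $|H_I|=|H_J|$ whenever $I,J\subseteq[m]$ have the same run decomposition. Pairs $(I_1,I_2)$, $(J_1,J_2)$ of subsets of $[m]$ with $I_1\cap I_2=J_1\cap J_2=\emptyset$ are equivalent, written $(I_1,I_2)\sim(J_1,J_2)$, if there is a bijection $\sigma:[m]\to[m]$ with $\sigma(I_1)=J_1$, $\sigma(I_2)=J_2$, and for all $i,j\in I_1\cup I_2$, $|\sigma(i)-\sigma(j)|=1$ iff $|i-j|=1$. *)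

(* Defs.v *)
(* The index set [m] = {1,...,m} is represented by 'I_m = {0,...,m-1};
   the shift by one preserves consecutiveness, so all notions are unchanged. *)
From mathcomp Require Import all_boot all_fingroup.
Set Implicit Arguments. Unset Strict Implicit. Unset Printing Implicit Defensive.

Definition Hsub (T : finType) (m : nat) (U : {set T}) (A : 'I_m -> {set T})
    (I1 I2 : {set 'I_m}) : {set T} :=
  U :&: (\bigcap_(i in I1) A i) :&: (\bigcap_(i in I2) (U :\: A i)).

Definition Hset (T : finType) (m : nat) (U : {set T}) (A : 'I_m -> {set T})
    (I : {set 'I_m}) : {set T} := Hsub U A I set0.

Definition inI (m : nat) (I : {set 'I_m}) (n : nat) : bool :=
  [exists k : 'I_m, (k \in I) && (val k == n)].

Definition run_start (m : nat) (I : {set 'I_m}) (i : 'I_m) : bool :=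
  (i \in I) && ((val i == 0) || ~~ inI I (val i).-1).

Definition run_len (m : nat) (I : {set 'I_m}) (i : 'I_m) : nat :=
  #|[set j : 'I_m | (i <= j) && [forall k : 'I_m, ((i <= k) && (k <= j)) ==> (k \in I)]]|.

Definition run_decomp (m : nat) (I : {set 'I_m}) : seq nat :=
  sort geq [seq run_len I i | i <- enum I & run_start I i].

Definition harmonic (T : finType) (m : nat) (U : {set T}) (A : 'I_m -> {set T}) : Prop :=
  forall I J : {set 'I_m}, run_decomp I = run_decomp J -> #|Hset U A I| = #|Hset U A J|.

Definition adjacent (i j : nat) : bool := (i.+1 == j) || (j.+1 == i).

Definition pair_equiv (m : nat) (I1 I2 J1 J2 : {set 'I_m}) : Prop :=
  [disjoint I1 & I2] /\ [disjoint J1 & J2] /\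
  exists s : {perm 'I_m},
    [/\ s @: I1 = J1, s @: I2 = J2 &
        forall i j, i \in I1 :|: I2 -> j \in I1 :|: I2 ->
          adjacent (val (s i)) (val (s j)) = adjacent (val i) (val j)].

(* Main.v *)
Require Import Defs.
From mathcomp Require Import all_boot all_fingroup.
From mathcomp Require Import zify.
Set Implicit Arguments. Unset Strict Implicit. Unset Printing Implicit Defensive.

Lemma val_ordE m (i : 'I_m) : val i = nat_of_ord i. Proof. by []. Qed.
Ltac vlia := simpl in *; lia.

Definition conn (m : nat) (X : {set 'I_m}) (x y : 'I_m) : bool :=
  [forall k : 'I_m, ((minn x y <= k) && (k <= maxn x y)) ==> (k \in X)].

Lemma connP m (X : {set 'I_m}) (x y : 'I_m) :
  reflect (forall k : 'I_m, minn x y <= k -> k <= maxn x y -> k \in X) (conn X x y).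
Proof.
apply: (iffP forallP) => H k.
- move=> h1 h2; exact: (implyP (H k) (introT andP (conj h1 h2))).
- apply/implyP => /andP[h1 h2]; exact: H.
Qed.

Lemma conn_meml m (X : {set 'I_m}) (x y : 'I_m) : conn X x y -> x \in X.
Proof. move/connP; apply; vlia. Qed.

Lemma conn_memr m (X : {set 'I_m}) (x y : 'I_m) : conn X x y -> y \in X.
Proof. move/connP; apply; vlia. Qed.

Lemma conn_refl m (X : {set 'I_m}) (x : 'I_m) : x \in X -> conn X x x.
Proof.
move=> xX; apply/connP => k h1 h2.
have -> : k = x by apply/val_inj => /=; vlia.
done.
Qed.

Lemma conn_sym m (X : {set 'I_m}) (x y : 'I_m) : conn X x y -> conn X y x.
Proof. move/connP => H; apply/connP => k h1 h2; apply: H; vlia. Qed.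

Lemma conn_sub m (X : {set 'I_m}) (x y a b : 'I_m) : conn X x y ->
  minn x y <= a <= maxn x y -> minn x y <= b <= maxn x y -> conn X a b.
Proof. move/connP => H ha hb; apply/connP => k h1 h2; apply: H; vlia. Qed.

Lemma conn_trans m (X : {set 'I_m}) (x y z : 'I_m) : conn X x y -> conn X y z -> conn X x z.
Proof.
move=> /connP H1 /connP H2; apply/connP => k h1 h2.
have [h|h] : (minn x y <= k /\ k <= maxn x y) \/ (minn y z <= k /\ k <= maxn y z) by vlia.
- by apply: H1; case: h.
- by apply: H2; case: h.
Qed.

Lemma conn_adj m (X : {set 'I_m}) (a b : 'I_m) : a \in X -> b \in X -> adjacent a b -> conn X a b.
Proof.
move=> aX bX hab; move: hab; rewrite /adjacent => hab; apply/connP => k h1 h2.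
have [e|e] : val k = val a \/ val k = val b by vlia.
- by have -> : k = a by apply/val_inj.
- by have -> : k = b by apply/val_inj.
Qed.

Lemma conn_image m (X : {set 'I_m}) (f : 'I_m -> 'I_m) :
  (forall x y, x \in X -> y \in X -> adjacent x y -> adjacent (f x) (f y)) ->
  forall x y, conn X x y -> conn (f @: X) (f x) (f y).
Proof.
move=> hf.
have key : forall n (x y : 'I_m), val y - val x = n -> x <= y -> conn X x y ->
   conn (f @: X) (f x) (f y).
  elim=> [|n IH] x y hn hxy hc.
    have -> : y = x by apply/val_inj => /=; vlia.
    by apply: conn_refl; apply: imset_f; apply: conn_meml hc.
  have hx1 : x.+1 < m by have := ltn_ord y; vlia.
  pose x' := Ordinal hx1.
  have c1 : conn X x x' by apply: (conn_sub hc) => /=; vlia.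
  have c2 : conn X x' y by apply: (conn_sub hc) => /=; vlia.
  have := IH x' y ltac:(rewrite /=; vlia) ltac:(rewrite /=; vlia) c2.
  apply: conn_trans; apply: conn_adj.
  - by apply: imset_f; apply: conn_meml c1.
  - by apply: imset_f; apply: conn_memr c1.
  - apply: hf; [exact: conn_meml c1 | exact: conn_memr c1 | rewrite /adjacent /=; vlia].
move=> x y hc; case: (leqP x y) => h.
- exact: (key _ x y erefl h hc).
- apply: conn_sym; apply: (key _ y x erefl (ltnW h)); exact: conn_sym.
Qed.

Lemma start_le m (X : {set 'I_m}) (i y : 'I_m) : run_start X i -> conn X i y -> i <= y.
Proof.
move=> /andP[iX hs] hc; rewrite leqNgt; apply/negP => hyi.
have hi1 : (val i).-1 < m by have := ltn_ord i; vlia.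
have kX : Ordinal hi1 \in X by move/connP: hc; apply => /=; vlia.
move: hs; rewrite (_ : (val i == 0) = false); last by vlia.
rewrite /= => /negP; apply; apply/existsP; exists (Ordinal hi1); by rewrite kX /=.
Qed.

Lemma starts_eq m (X : {set 'I_m}) (i j : 'I_m) : run_start X i -> run_start X j -> conn X i j -> i = j.
Proof.
move=> hi hj hc; apply/val_inj => /=.
have := start_le hi hc; have := start_le hj (conn_sym hc); vlia.
Qed.

Definition cs m (X : {set 'I_m}) (x : 'I_m) := #|[set y | conn X x y]|.

Lemma cs_conn m (X : {set 'I_m}) (x y : 'I_m) : conn X x y -> cs X x = cs X y.
Proof.
move=> hc; rewrite /cs; apply: eq_card => z; rewrite !inE; apply/idP/idP => h.
- exact: conn_trans (conn_sym hc) h.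
- exact: conn_trans hc h.
Qed.

Definition st m (X : {set 'I_m}) (x : 'I_m) := [arg min_(j < x | conn X j x) val j].

Lemma st_spec m (X : {set 'I_m}) (x : 'I_m) : x \in X ->
  [/\ conn X (st X x) x, run_start X (st X x) & st X x <= x].
Proof.
move=> xX; rewrite /st; case: arg_minnP; first exact: conn_refl.
move=> j hj hmin; split => //; last by apply: hmin; exact: conn_refl.
rewrite /run_start (conn_meml hj) /=.
case: eqP => //= hj0; apply/negP => /existsP[k /andP[kX /eqP kv]].
have ckj : conn X k j by apply: conn_adj => //; [exact: conn_meml hj | rewrite /adjacent; vlia].
have := hmin k (conn_trans ckj hj); vlia.
Qed.

Lemma st_uniq m (X : {set 'I_m}) (i x : 'I_m) : run_start X i -> conn X i x -> st X x = i.
Proof.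
move=> hi hc; have xX := conn_memr hc; case: (st_spec xX) => h1 h2 _.
apply: starts_eq h2 hi _; exact: conn_trans h1 (conn_sym hc).
Qed.

Lemma cs_run_len m (X : {set 'I_m}) (i : 'I_m) : run_start X i -> cs X i = run_len X i.
Proof.
move=> hi; rewrite /cs /run_len; apply: eq_card => y; rewrite !inE.
apply/idP/idP.
- move=> hc; have hle := start_le hi hc; rewrite hle /=.
  apply/forallP => k; apply/implyP => /andP[h1 h2]; move/connP: hc; apply; vlia.
- move=> /andP[hle /forallP H]; apply/connP => k h1 h2; apply: (implyP (H k)); vlia.
Qed.

Lemma card_interval m a b : b <= m -> #|[set k : 'I_m | a <= k < b]| = b - a.
Proof.
elim: b => [|b IH] hb.
  rewrite sub0n; apply/eqP; rewrite cards_eq0; apply/eqP/setP => k.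
  by rewrite !inE ltn0 andbF.
case: (leqP a b) => hab.
- have hbm : b < m by [].
  have -> : [set k : 'I_m | a <= k < b.+1] = (Ordinal hbm) |: [set k : 'I_m | a <= k < b].
    apply/setP => k; rewrite !inE -val_eqE /=; vlia.
  rewrite cardsU1 IH ?inE /=; [vlia | vlia].
- have -> : [set k : 'I_m | a <= k < b.+1] = set0.
    apply/setP => k; rewrite !inE; vlia.
  rewrite cards0; vlia.
Qed.

Lemma comp_bound m (X : {set 'I_m}) (i : 'I_m) : run_start X i -> i + cs X i <= m.
Proof.
move=> hi.
have : cs X i <= #|[set k : 'I_m | i <= k < m]|.
  apply: subset_leq_card; apply/subsetP => k; rewrite !inE => hc.
  by rewrite (start_le hi hc) ltn_ord.
rewrite card_interval //; have := ltn_ord i; vlia.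
Qed.

Lemma comp_iff m (X : {set 'I_m}) (i y : 'I_m) : run_start X i -> conn X i y = (i <= y < i + cs X i).
Proof.
move=> hi; apply/idP/idP.
- move=> hc; have hle := start_le hi hc.
  have : #|[set k : 'I_m | i <= k < y.+1]| <= cs X i.
    apply: subset_leq_card; apply/subsetP => k; rewrite !inE => hk.
    apply: (conn_sub hc); vlia.
  rewrite card_interval //; vlia.
- move=> hy; case: (boolP (conn X i y)) => // /negP nc; exfalso.
  have : cs X i <= #|[set k : 'I_m | i <= k < y]|.
    apply: subset_leq_card; apply/subsetP => k; rewrite !inE => hc.
    rewrite (start_le hi hc) /= ltnNge; apply/negP => hyk; apply: nc.
    apply: (conn_sub hc) => /=; have := start_le hi hc; vlia.
  rewrite card_interval; [vlia | exact: ltnW (ltn_ord y)].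
Qed.

Definition StL m (X : {set 'I_m}) L := [set i | run_start X i && (cs X i == L)].

Lemma count_enum_set (T : finType) (A : {set T}) (P : pred T) :
  count P (enum A) = #|[set x in A | P x]|.
Proof.
rewrite -size_filter.
have /card_uniqP <- : uniq (filter P (enum A)) by rewrite filter_uniq // enum_uniq.
apply: eq_card => x; rewrite !inE mem_filter mem_enum andbC.
by [].
Qed.

Lemma count_runlist m (X : {set 'I_m}) L :
  count (pred1 L) [seq run_len X i | i <- enum X & run_start X i] = #|StL X L|.
Proof.
rewrite count_map count_filter count_enum_set; apply: eq_card => i; rewrite !inE /=.
case hs: (run_start X i); rewrite ?andbF ?andbT //=.
have /andP[iX _] := hs; by rewrite cs_run_len // iX.
Qed.

Lemma cnt_formula m (X : {set 'I_m}) L :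
  #|[set x in X | cs X x == L]| = L * #|StL X L|.
Proof.
rewrite -sum1_card (partition_big (st X) (mem (StL X L))); last first.
  move=> x; rewrite !inE => /andP[xX /eqP hL]; case: (st_spec xX) => h1 h2 _.
  by rewrite h2 (cs_conn h1) hL eqxx.
rewrite (eq_bigr (fun _ => L)); first by rewrite sum_nat_const mulnC.
move=> i hi0; have : i \in StL X L := hi0; rewrite inE => /andP[hi /eqP hL].
rewrite sum1dep_card -hL; apply: eq_card => x; rewrite !inE.
apply/idP/idP.
- move=> /andP[/andP[xX _] /eqP <-]; by case: (st_spec xX).
- move=> hc; have xX := conn_memr hc.
  by rewrite xX (st_uniq hi hc) eqxx (cs_conn hc) eqxx.
Qed.

Lemma cs_pos m (X : {set 'I_m}) (x : 'I_m) : x \in X -> 0 < cs X x.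
Proof. move=> xX; apply/card_gt0P; exists x; rewrite inE; exact: conn_refl. Qed.

Section Perm.
Variables (m : nat) (s : {perm 'I_m}) (X : {set 'I_m}).
Hypothesis hadj : forall i j, i \in X -> j \in X -> adjacent (s i) (s j) = adjacent i j.

Lemma cs_perm x : x \in X -> cs (s @: X) (s x) = cs X x.
Proof.
move=> xX; rewrite /cs -[RHS](card_imset _ (@perm_inj _ s)); apply: eq_card => z; apply/idP/imsetP.
- rewrite inE => h; have := conn_memr h => /imsetP[y yX ezy]; subst z.
  exists y => //; rewrite inE.
  have hinv : forall a b, a \in s @: X -> b \in s @: X -> adjacent a b ->
      adjacent ((s^-1)%g a) ((s^-1)%g b).
    move=> a b /imsetP[a' a'X ->] /imsetP[b' b'X ->]; rewrite !permK hadj //.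
  have := conn_image hinv h; rewrite !permK.
  have -> : [set (s^-1)%g x | x in s @: X] = X.
    apply/setP => w; apply/imsetP/idP.
    + by case=> w' /imsetP[w'' w''X ->] ->; rewrite permK.
    + move=> wX; exists (s w); [exact: imset_f | by rewrite permK].
  by [].
- case=> y hc ->; rewrite inE in hc; rewrite inE; apply: conn_image hc => a b aX bX; by rewrite hadj.
Qed.

Lemma cnt_perm L : #|[set z in s @: X | cs (s @: X) z == L]| = #|[set x in X | cs X x == L]|.
Proof.
rewrite -[RHS](card_imset _ (@perm_inj _ s)); apply: eq_card => z.
apply/idP/imsetP.
- rewrite inE => /andP[/imsetP[y yX ->] h]; exists y => //; by rewrite inE yX /= -(cs_perm yX).
- case=> y hy ->; rewrite inE in hy; case/andP: hy => yX h; by rewrite inE (imset_f _ yX) /= cs_perm.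
Qed.

Lemma StL_perm L : #|StL (s @: X) L| = #|StL X L|.
Proof.
case: L => [|L].
- have E : forall Y : {set 'I_m}, #|StL Y 0| = 0.
    move=> Y; apply/eqP; rewrite cards_eq0; apply/eqP/setP => i; rewrite !inE.
    apply/negP => /andP[/andP[iY _] /eqP h]; have := cs_pos iY; vlia.
  by rewrite !E.
- apply/eqP; rewrite -(eqn_pmul2l (ltn0Sn L)) -!cnt_formula cnt_perm.
  by [].
Qed.

End Perm.

Lemma geq_total : total geq. Proof. move=> x y /=; vlia. Qed.
Lemma geq_trans : transitive geq. Proof. move=> x y z /=; vlia. Qed.
Lemma geq_anti : antisymmetric geq. Proof. move=> x y /=; vlia. Qed.

Lemma run_decomp_StL m (I J : {set 'I_m}) :
  run_decomp I = run_decomp J <-> forall L, #|StL I L| = #|StL J L|.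
Proof.
rewrite /run_decomp; split.
- move/(perm_sortP geq_total geq_trans geq_anti)/seq.permP => H L.
  by rewrite -!count_runlist H.
- move=> H; apply/(perm_sortP geq_total geq_trans geq_anti).
  rewrite /perm_eq; apply/allP => L _; apply/eqP.
  by rewrite !count_runlist.
Qed.

Lemma memH (T : finType) m (U : {set T}) (A : 'I_m -> {set T}) (I1 I2 : {set 'I_m}) (x : T) :
  (x \in Hsub U A I1 I2) =
  [&& x \in U, [forall i in I1, x \in A i] & [forall i in I2, x \notin A i]].
Proof.
rewrite /Hsub !in_setI.
case xU: (x \in U) => //=.
congr andb.
- by apply/bigcapP/forall_inP.
- apply/bigcapP/forall_inP => H i iI; move: (H i iI); by rewrite ?in_setD xU ?andbT.
Qed.

Lemma split_card (T : finType) m (U : {set T}) (A : 'I_m -> {set T}) (I1 I2 : {set 'I_m}) (j : 'I_m) :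
  j \in I2 ->
  #|Hsub U A I1 (I2 :\ j)| = #|Hsub U A I1 I2| + #|Hsub U A (j |: I1) (I2 :\ j)|.
Proof.
move=> jI2; rewrite -(cardsID (A j) (Hsub U A I1 (I2 :\ j))) addnC.
congr (_ + _); apply: eq_card => x.
- rewrite in_setD !memH.
  case: (x \in U) => //=; case: [forall i in I1, x \in A i] => //=; rewrite ?andbF //.
  apply/andP/forall_inP.
  + case=> nj /forall_inP H i iI2; case: (eqVneq i j) => [-> //|ne].
    by apply: H; rewrite !inE ne iI2.
  + move=> H; split; first exact: H.
    by apply/forall_inP => i; rewrite !inE => /andP[_ ?]; apply: H.
- rewrite in_setI !memH.
  case: (x \in U) => //=; rewrite andbC.
  case: [forall i in I2 :\ j, x \notin A i] => //=; rewrite ?andbF //.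
  rewrite !andbT; apply/andP/forall_inP.
  + case=> hj /forall_inP H i; rewrite !inE => /orP[/eqP -> //|]; exact: H.
  + move=> H; split; first by apply: H; rewrite !inE eqxx.
    by apply/forall_inP => i iI; apply: H; rewrite !inE iI orbT.
Qed.

Lemma imsetD1_perm m (s : {perm 'I_m}) (B : {set 'I_m}) j :
  s @: (B :\ j) = (s @: B) :\ s j.
Proof.
apply/setP => z; rewrite !inE; apply/imsetP/andP.
- case=> y hy ->; move: hy; rewrite !inE => /andP[ne yB]; split; last exact: imset_f.
  by rewrite (inj_eq perm_inj).
- case=> ne /imsetP[y yB ez]; exists y => //; rewrite !inE yB andbT.
  by apply: contraNneq ne => e; rewrite ez e.
Qed.

Lemma fwd (T : finType) m (U : {set T}) (A : 'I_m -> {set T}) (h : harmonic U A)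
   (s : {perm 'I_m}) n : forall I1 I2 : {set 'I_m}, #|I2| = n ->
   (forall i j, i \in I1 :|: I2 -> j \in I1 :|: I2 -> adjacent (s i) (s j) = adjacent i j) ->
   #|Hsub U A I1 I2| = #|Hsub U A (s @: I1) (s @: I2)|.
Proof.
elim: n => [|n IH] I1 I2 hc hadj.
  rewrite (cards0_eq hc) imset0.
  apply: (h I1 (s @: I1)); symmetry; apply/run_decomp_StL => L.
  apply: StL_perm => i j iI jI; apply: hadj; rewrite inE ?iI ?jI //.
have [j jI2] : exists j, j \in I2 by apply/card_gt0P; rewrite hc.
have e1 := split_card U A I1 jI2.
have e2 := split_card U A (s @: I1) (imset_f s jI2).
have hc' : #|I2 :\ j| = n by move: hc; rewrite (cardsD1 j I2) jI2 add1n => -[].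
have IH1 := IH I1 (I2 :\ j) hc'.
have IH2 := IH (j |: I1) (I2 :\ j) hc'.
rewrite imsetD1_perm in IH1 IH2; rewrite imsetU1 in IH2.
have s1 : forall i, i \in I1 :|: (I2 :\ j) -> i \in I1 :|: I2.
  by move=> i; rewrite !inE => /orP[->|/andP[_ ->]]; rewrite ?orbT.
have s2 : forall i, i \in (j |: I1) :|: (I2 :\ j) -> i \in I1 :|: I2.
  move=> i; rewrite !inE => /orP[/orP[/eqP ->|->]|/andP[_ ->]]; by rewrite ?jI2 ?orbT.
have := IH1 (fun a b ha hb => hadj a b (s1 a ha) (s1 b hb)).
have := IH2 (fun a b ha hb => hadj a b (s2 a ha) (s2 b hb)).
move=> E2 E1; apply/eqP; rewrite -(eqn_add2r #|Hsub U A (j |: I1) (I2 :\ j)|) -e1 E1 e2 E2.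
by apply/eqP.
Qed.

Definition bij (T : finType) (A B : {set T}) (x : T) : T := nth x (enum B) (index x (enum A)).

Lemma bij_in (T : finType) (A B : {set T}) x : #|A| = #|B| -> x \in A -> bij A B x \in B.
Proof.
move=> hAB xA; rewrite /bij -mem_enum; apply: mem_nth.
by rewrite -cardE -hAB cardE index_mem mem_enum.
Qed.

Lemma bij_inj (T : finType) (A B : {set T}) x y : #|A| = #|B| -> x \in A -> y \in A ->
  bij A B x = bij A B y -> x = y.
Proof.
move=> hAB xA yA; rewrite /bij.
have hx : index x (enum A) < size (enum B) by rewrite -cardE -hAB cardE index_mem mem_enum.
have hy : index y (enum A) < size (enum B) by rewrite -cardE -hAB cardE index_mem mem_enum.
rewrite (set_nth_default x y hy) => /eqP; rewrite nth_uniq ?enum_uniq // => /eqP e.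
have xe : x \in enum A by rewrite mem_enum.
have ye : y \in enum A by rewrite mem_enum.
have h1 := nth_index x xe; have h2 := nth_index x ye; rewrite e h2 in h1.
by rewrite h1.
Qed.

Lemma bij_surj (T : finType) (A B : {set T}) y : #|A| = #|B| -> y \in B ->
  exists2 x, x \in A & bij A B x = y.
Proof.
move=> hAB yB.
have ye : y \in enum B by rewrite mem_enum.
have hy : index y (enum B) < size (enum A) by rewrite -cardE hAB cardE index_mem.
exists (nth y (enum A) (index y (enum B))); first by rewrite -mem_enum mem_nth.
rewrite /bij index_uniq ?enum_uniq //.
by rewrite (set_nth_default y) ?nth_index // index_mem.
Qed.

Lemma perm_ext (T : finType) (f : T -> T) (I J : {set T}) :
  {in I &, injective f} -> f @: I = J -> exists s : {perm T}, {in I, s =1 f}.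
Proof.
move=> finj hJ.
have cIJ : #|I| = #|J| by rewrite -hJ card_in_imset.
have cC : #|~: I| = #|~: J|.
  apply/eqP; rewrite -(eqn_add2l #|I|) cardsC cIJ cardsC //.
pose g x := if x \in I then f x else bij (~: I) (~: J) x.
have ginj : injective g.
  move=> x y; rewrite /g.
  case: ifP => xI; case: ifP => yI.
  - exact: finj.
  - move=> E; have : f x \in J by rewrite -hJ imset_f.
    have : bij (~: I) (~: J) y \in ~: J by apply: bij_in; rewrite // inE yI.
    by rewrite -E inE => /negP.
  - move=> E; have : f y \in J by rewrite -hJ imset_f.
    have : bij (~: I) (~: J) x \in ~: J by apply: bij_in; rewrite // inE xI.
    by rewrite E inE => /negP.
  - by apply: bij_inj; rewrite // inE ?xI ?yI.
by exists (perm ginj) => x xI; rewrite permE /g xI.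
Qed.

Section Bwd.
Variables (m : nat) (I J : {set 'I_m}).
Hypothesis hSt : forall L, #|StL I L| = #|StL J L|.

Definition tau L (i : 'I_m) := bij (StL I L) (StL J L) i.
Definition fb (x : 'I_m) : 'I_m := insubd x (val (tau (cs I x) (st I x)) + (x - st I x)).

Lemma fb_spec x : x \in I ->
  [/\ st I x \in StL I (cs I x), tau (cs I x) (st I x) \in StL J (cs I x),
      st I x <= x < st I x + cs I x,
      val (fb x) = tau (cs I x) (st I x) + (x - st I x) &
      conn J (tau (cs I x) (st I x)) (fb x)].
Proof.
move=> xI; case: (st_spec xI) => c s _.
have h1 : st I x \in StL I (cs I x) by rewrite inE s (cs_conn c) eqxx.
have h2 := bij_in (hSt _) h1.
have h3 : st I x <= x < st I x + cs I x by have := c; rewrite comp_iff // (cs_conn c).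
move: h2; rewrite -/(tau _ _) => h2.
have /andP[sj /eqP cj] : run_start J (tau (cs I x) (st I x)) &&
   (cs J (tau (cs I x) (st I x)) == cs I x) by move: h2; rewrite inE.
have h4 := comp_bound sj; rewrite cj in h4.
have v : val (fb x) = tau (cs I x) (st I x) + (x - st I x).
  rewrite /fb val_insubd ifT //; vlia.
split => //.
rewrite comp_iff // v cj; vlia.
Qed.

Lemma fb_in x : x \in I -> fb x \in J.
Proof. by move=> xI; case: (fb_spec xI) => _ _ _ _ /conn_memr. Qed.

Lemma fb_st x : x \in I -> st J (fb x) = tau (cs I x) (st I x).
Proof.
move=> xI; case: (fb_spec xI) => _ h2 _ _ c; apply: st_uniq c.
by move: h2; rewrite inE => /andP[].
Qed.

Lemma fb_cs x : x \in I -> cs J (fb x) = cs I x.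
Proof.
move=> xI; case: (fb_spec xI) => _ h2 _ _ c; rewrite -(cs_conn c).
by move: h2; rewrite inE => /andP[_ /eqP].
Qed.

Lemma fb_conn x y : x \in I -> y \in I -> conn J (fb x) (fb y) -> conn I x y.
Proof.
move=> xI yI c.
have e : st J (fb y) = st J (fb x).
  have fxJ := fb_in xI; case: (st_spec fxJ) => c1 s1 _.
  apply: st_uniq s1 _; exact: conn_trans c1 c.
rewrite !fb_st // in e.
have eL : cs I y = cs I x by rewrite -!fb_cs // (cs_conn c).
rewrite eL in e.
case: (fb_spec xI) => hx _ _ _ _; case: (fb_spec yI) => hy _ _ _ _.
rewrite eL in hy.
have ei := bij_inj (hSt _) hy hx e.
case: (st_spec xI) => cx _ _; case: (st_spec yI) => cy _ _.
rewrite ei in cy; exact: conn_trans (conn_sym cx) cy.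
Qed.

Lemma fb_same x y : x \in I -> y \in I -> conn I x y ->
  st I y = st I x /\ cs I y = cs I x.
Proof.
move=> xI yI c; split; last by rewrite (cs_conn c).
case: (st_spec xI) => cx sx _; apply: st_uniq sx _; exact: conn_trans cx c.
Qed.

Lemma fb_adj x y : x \in I -> y \in I -> adjacent (fb x) (fb y) = adjacent x y.
Proof.
move=> xI yI; case: (boolP (conn I x y)) => c.
- case: (fb_same xI yI c) => es ec.
  case: (fb_spec xI) => _ _ hx vx _; case: (fb_spec yI) => _ _ hy vy _.
  rewrite es ec in hy vy; rewrite /adjacent vx vy; vlia.
- have na : adjacent x y = false.
    by apply/negP => a; apply: (negP c); apply: conn_adj.
  rewrite na; apply/negP => a; apply: (negP c); apply: fb_conn => //.
  by apply: conn_adj => //; apply: fb_in.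
Qed.

Lemma fb_inj : {in I &, injective fb}.
Proof.
move=> x y xI yI e.
have c : conn I x y by apply: fb_conn => //; rewrite e; apply: conn_refl; apply: fb_in.
case: (fb_same xI yI c) => es ec.
case: (fb_spec xI) => _ _ hx vx _; case: (fb_spec yI) => _ _ hy vy _.
rewrite es ec in hy vy.
apply/val_inj; have : val (fb x) = val (fb y) by rewrite e.
rewrite vx vy; vlia.
Qed.

Lemma fb_im : fb @: I = J.
Proof.
apply/setP => y; apply/imsetP/idP.
- by case=> x xI ->; apply: fb_in.
- move=> yJ; case: (st_spec yJ) => c s _.
  have jS : st J y \in StL J (cs J y) by rewrite inE s (cs_conn c) eqxx.
  case: (bij_surj (hSt _) jS) => i iS ei.
  move: (iS); rewrite inE => /andP[si /eqP ciL].
  have hy : st J y <= y < st J y + cs J y by have := c; rewrite comp_iff // (cs_conn c).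
  have hb := comp_bound si; rewrite ciL in hb.
  pose x : 'I_m := insubd y (i + (y - st J y)).
  have vx : val x = i + (y - st J y) by rewrite val_insubd ifT //; vlia.
  have cx : conn I i x by rewrite comp_iff // vx ciL; vlia.
  have xI := conn_memr cx.
  exists x => //; apply/val_inj.
  case: (fb_spec xI) => _ _ _ vf _.
  rewrite vf (st_uniq si cx) -(cs_conn cx) ciL /tau ei vx; vlia.
Qed.

End Bwd.

Theorem lemma3p22 (T : finType) (m : nat) (U : {set T}) (A : 'I_m -> {set T})
    (hA : forall i, A i \subset U) :
  harmonic U A <->
  (forall I1 I2 J1 J2 : {set 'I_m}, pair_equiv I1 I2 J1 J2 ->
     #|Hsub U A I1 I2| = #|Hsub U A J1 J2|).
Proof.
split.
- move=> h I1 I2 J1 J2 [_ [_ [s [<- <- hadj]]]]; exact: (@fwd _ _ U A h s _ I1 I2 erefl hadj).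
- move=> H I J hr.
  have hSt := (run_decomp_StL I J).1 hr.
  case: (perm_ext (fb_inj hSt) (fb_im hSt)) => s hs.
  have d0 : forall X : {set 'I_m}, [disjoint X & set0].
    by move=> X; rewrite disjoints_subset setC0 subsetT.
  apply: (H I set0 J set0); split; [exact: d0 | split; [exact: d0 |]].
  exists s; split.
  + rewrite -(fb_im hSt); apply: eq_in_imset => x xI; exact: hs.
  + exact: imset0.
  + move=> i j; rewrite setU0 => iI jI; rewrite !hs //; exact: fb_adj.
Qed.
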